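(* Let $(T,[\cdot,\cdot],[\cdot,\cdot,\cdot],\alpha)$ be a Hom-Lie-Yamaguti algebra and $(\rho,D,\theta)$ a representation of $T$ on a Hom-vector space $(V,\beta)$. Then there is a bijection $$\mathrm{Ext}(T,V)\longrightarrow H^2(T,V)\times H^3(T,V)$$ between the set of equivalence classes of abelian extensions of $T$ by $V$ (inducing the given representation) and the (2,3)-cohomology group; that is, abelian extensions of $T$ by $V$ are classified by the (2,3)-cohomology group.
   Context: Throughout, vector spaces are over an algebraically closed field $\mathbb{K}$ of characteristic different from 2 and 3. A Hom-Lie-Yamaguti algebra (HLYA) is a vector space $T$ with a linear map $\alpha:T\to T$, a bilinear map $[\cdot,\cdot]$ and a trilinear map $[\cdot,\cdot,\cdot]$ on $T$ such that for all $x_i,y_i\in T$: (HLY01) $\alpha([x_1,x_2])=[\alpha(x_1),\alpha(x_2)]$; (HLY02) $\alpha([x_1,x_2,x_3])=[\alpha(x_1),\alpha(x_2),\alpha(x_3)]$; (HLY1) $[x_1,x_2]+[x_2,x_1]=0$; (HLY2) $[x_1,x_2,x_3]+[x_2,x_1,x_3]=0$; (HLY3) $\sum_{\mathrm{cyc}(x_1,x_2,x_3)}([[x_1,x_2],\alpha(x_3)]+[x_1,x_2,x_3])=0$; (HLY4) $[[x_1,x_2],\alpha(x_3),\alpha(y_1)]+[[x_2,x_3],\alpha(x_1),\alpha(y_1)]+[[x_3,x_1],\alpha(x_2),\alpha(y_1)]=0$; (HLY5) $[\alpha(x_1),\alpha(x_2),[y_1,y_2]]=[[x_1,x_2,y_1],\alpha^2(y_2)]+[\alpha^2(y_1),[x_1,x_2,y_2]]$;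 (HLY6) $[\alpha^2(x_1),\alpha^2(x_2),[y_1,y_2,y_3]]=[[x_1,x_2,y_1],\alpha^2(y_2),\alpha^2(y_3)]+[\alpha^2(y_1),[x_1,x_2,y_2],\alpha^2(y_3)]+[\alpha^2(y_1),\alpha^2(y_2),[x_1,x_2,y_3]]$. A homomorphism of HLYAs is a linear map intertwining the structure maps and preserving both brackets. A representation of $(T,\alpha)$ on $(V,\beta)$ is a linear map $\rho:T\to\mathrm{End}(V)$ and bilinear maps $D,\theta:T\times T\to\mathrm{End}(V)$ satisfying, for all $x_i,y_i\in T$: (HR01) $\rho(\alpha(x_1))\circ\beta=\beta\circ\rho(x_1)$; (HR02) $D(\alpha(x_1),\alpha(x_2))\circ\beta=\beta\circ D(x_1,x_2)$; (HR03) $\theta(\alpha(x_1),\alpha(x_2))\circ\beta=\beta\circ\theta(x_1,x_2)$; (HR31) $D(x_1,x_2)-\theta(x_2,x_1)+\theta(x_1,x_2)+\rho([x_1,x_2])\circ\beta-\rho(\alpha(x_1))\rho(x_2)+\rho(\alpha(x_2))\rho(x_1)=0$; (HR41) $D([x_1,x_2],\alpha(x_3))+D([x_2,x_3],\alpha(x_1))+D([x_3,x_1],\alpha(x_2))=0$; (HR42) $\theta([x_1,x_2],\alpha(y_1))\circ\beta=\theta(\alpha(x_1),\alpha(y_1))\rho(x_2)-\theta(\alpha(x_2),\alpha(y_1))\rho(x_1)$; (HR51) $D(\alpha(x_1),\alpha(x_2))\rho(y_2)=\rho(\alpha^2(y_2))D(x_1,x_2)+\rho([x_1,x_2,y_2])\circ\beta^2$;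 (HR52) $\theta(\alpha(x_1),[y_1,y_2])\circ\beta=\rho(\alpha^2(y_1))\theta(x_1,y_2)-\rho(\alpha^2(y_2))\theta(x_1,y_1)$; (HR61) $D(\alpha^2(x_1),\alpha^2(x_2))\theta(y_1,y_2)=\theta(\alpha^2(y_1),\alpha^2(y_2))D(x_1,x_2)+\theta([x_1,x_2,y_1],\alpha^2(y_2))\circ\beta^2+\theta(\alpha^2(y_1),[x_1,x_2,y_2])\circ\beta^2$; (HR62) $\theta(\alpha^2(x_1),[y_1,y_2,y_3])\circ\beta^2=\theta(\alpha^2(y_2),\alpha^2(y_3))\theta(x_1,y_1)-\theta(\alpha^2(y_1),\alpha^2(y_3))\theta(x_1,y_2)+D(\alpha^2(y_1),\alpha^2(y_2))\theta(x_1,y_3)$. An extension of $(T,\alpha)$ by $(V,\beta)$ is a HLYA $(\hat T,[\cdot,\cdot]_{\hat T},[\cdot,\cdot,\cdot]_{\hat T},\hat\alpha)$ with an injective linear map $i:V\to\hat T$ satisfying $\hat\alpha\circ i=i\circ\beta$ and a surjective HLYA homomorphism $p:\hat T\to T$ with $\mathrm{Im}(i)=\mathrm{Ker}(p)$. It is abelian if $[u,v]_{\hat T}=0$ and $[u,v,z]_{\hat T}=[u,z,v]_{\hat T}=[z,u,v]_{\hat T}=0$ for all $u,v\in i(V)$, $z\in\hat T$. A section is a linear $\sigma:T\to\hat T$ with $p\circ\sigma=\mathrm{id}_T$ and $\hat\alpha\circ\sigma=\sigma\circ\alpha$; identifying $V$ with $i(V)$, the extension induces the maps $\rho(x)(u)=[\sigma(x),u]_{\hat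 T}$, $D(x_1,x_2)(u)=[\sigma(x_1),\sigma(x_2),u]_{\hat T}$, $\theta(x_1,x_2)(u)=[u,\sigma(x_1),\sigma(x_2)]_{\hat T}$ on $V$, and ''inducing the given representation'' means these coincide with the given $(\rho,D,\theta)$. Two extensions $0\to V\xrightarrow{i}\hat T\xrightarrow{p}T\to0$ and $0\to V\xrightarrow{j}\tilde T\xrightarrow{q}T\to0$ are equivalent if there is a HLYA homomorphism $F:\hat T\to\tilde T$ with $F\circ i=j$ and $q\circ F=p$. $\mathrm{Ext}(T,V)$ is the set of equivalence classes. $C^2(T,V)$: bilinear antisymmetric $\nu:T\times T\to V$ with $\nu(\alpha(x_1),\alpha(x_2))=\beta(\nu(x_1,x_2))$. $C^3(T,V)$: trilinear $\omega:T^3\to V$ with $\omega(x_1,x_2,x_3)=-\omega(x_2,x_1,x_3)$ and $\omega(\alpha(x_1),\alpha(x_2),\alpha(x_3))=\beta(\omega(x_1,x_2,x_3))$. $Z^2(T,V)\times Z^3(T,V)$ is the space of $(\nu,\omega)\in C^2\times C^3$ satisfying for all $x_i,y_i$: (CC1) $\sum_{\mathrm{cyc}(x_1,x_2,x_3)}\big(\omega(x_1,x_2,x_3)-\rho(\alpha(x_1))\nu(x_2,x_3)+\nu([x_1,x_2],\alpha(x_3))\big)=0$; (CC2) $\sum_{\mathrm{cyc}(x_1,x_2,x_3)}\big(\theta(\alpha(x_1),\alpha(y_1))\nu(x_2,x_3)+\omega([x_1,x_2],\alpha(x_3),\alpha(y_1))\big)=0$; (CC3) $\omega(\alpha(x_1),\alpha(x_2),[y_1,y_2])+D(\alpha(x_1),\alpha(x_2))\nu(y_1,y_2)=\nu([x_1,x_2,y_1],\alpha^2(y_2))+\nu(\alpha^2(y_1),[x_1,x_2,y_2])+\rho(\alpha^2(y_1))\omega(x_1,x_2,y_2)-\rho(\alpha^2(y_2))\omega(x_1,x_2,y_1)$;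 (CC4) $\omega(\alpha^2(x_1),\alpha^2(x_2),[y_1,y_2,y_3])+D(\alpha^2(x_1),\alpha^2(x_2))\omega(y_1,y_2,y_3)=\omega([x_1,x_2,y_1],\alpha^2(y_2),\alpha^2(y_3))+\omega(\alpha^2(y_1),[x_1,x_2,y_2],\alpha^2(y_3))+\omega(\alpha^2(y_1),\alpha^2(y_2),[x_1,x_2,y_3])+\theta(\alpha^2(y_2),\alpha^2(y_3))\omega(x_1,x_2,y_1)-\theta(\alpha^2(y_1),\alpha^2(y_3))\omega(x_1,x_2,y_2)+D(\alpha^2(y_1),\alpha^2(y_2))\omega(x_1,x_2,y_3)$. $B^2(T,V)\times B^3(T,V)$ is the set of $(\nu,\omega)\in C^2\times C^3$ for which there is a linear $f:T\to V$ with $f\circ\alpha=\beta\circ f$, $\nu(x_1,x_2)=\rho(x_1)f(x_2)-\rho(x_2)f(x_1)-f([x_1,x_2])$, $\omega(x_1,x_2,x_3)=\theta(x_2,x_3)f(x_1)-\theta(x_1,x_3)f(x_2)+D(x_1,x_2)f(x_3)-f([x_1,x_2,x_3])$. The (2,3)-cohomology group is $H^2(T,V)\times H^3(T,V)=(Z^2(T,V)\times Z^3(T,V))/(B^2(T,V)\times B^3(T,V))$. *)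

(* Defs.v *)
From HB Require Import structures.
From mathcomp Require Import all_boot all_algebra.
Set Implicit Arguments. Unset Strict Implicit. Unset Printing Implicit Defensive.
Import GRing.Theory.
Local Open Scope ring_scope.

Section Linearity.
Variable K : fieldType.

Definition lin1 (A B : lmodType K) (f : A -> B) : Prop :=
  forall (a : K) (x y : A), f (a *: x + y) = a *: f x + f y.

Definition lin2 (A B C : lmodType K) (f : A -> B -> C) : Prop :=
  (forall y, lin1 (fun x => f x y)) /\ (forall x, lin1 (f x)).

Definition lin3 (A B C E : lmodType K) (f : A -> B -> C -> E) : Prop :=
  [/\ forall y z, lin1 (fun x => f x y z),
      forall x z, lin1 (fun y => f x y z) &
      forall x y, lin1 (f x y)].
End Linearity.

Section HLYA.
Variable K : fieldType.

Record HLYA_axioms (T : lmodType K) (al : T -> T) (b2 : T -> T -> T)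
    (b3 : T -> T -> T -> T) : Prop := {
  hly_lin_al : lin1 al;
  hly_lin_b2 : lin2 b2;
  hly_lin_b3 : lin3 b3;
  HLY01 : forall x1 x2, al (b2 x1 x2) = b2 (al x1) (al x2);
  HLY02 : forall x1 x2 x3, al (b3 x1 x2 x3) = b3 (al x1) (al x2) (al x3);
  HLY1 : forall x1 x2, b2 x1 x2 + b2 x2 x1 = 0;
  HLY2 : forall x1 x2 x3, b3 x1 x2 x3 + b3 x2 x1 x3 = 0;
  HLY3 : forall x1 x2 x3,
    (b2 (b2 x1 x2) (al x3) + b3 x1 x2 x3)
    + (b2 (b2 x2 x3) (al x1) + b3 x2 x3 x1)
    + (b2 (b2 x3 x1) (al x2) + b3 x3 x1 x2) = 0;
  HLY4 : forall x1 x2 x3 y1,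
    b3 (b2 x1 x2) (al x3) (al y1) + b3 (b2 x2 x3) (al x1) (al y1)
    + b3 (b2 x3 x1) (al x2) (al y1) = 0;
  HLY5 : forall x1 x2 y1 y2,
    b3 (al x1) (al x2) (b2 y1 y2)
    = b2 (b3 x1 x2 y1) (al (al y2)) + b2 (al (al y1)) (b3 x1 x2 y2);
  HLY6 : forall x1 x2 y1 y2 y3,
    b3 (al (al x1)) (al (al x2)) (b3 y1 y2 y3)
    = b3 (b3 x1 x2 y1) (al (al y2)) (al (al y3))
      + b3 (al (al y1)) (b3 x1 x2 y2) (al (al y3))
      + b3 (al (al y1)) (al (al y2)) (b3 x1 x2 y3)
}.

Definition HLYA_hom (T1 : lmodType K) (al1 : T1 -> T1) (b21 : T1 -> T1 -> T1)
    (b31 : T1 -> T1 -> T1 -> T1)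
    (T2 : lmodType K) (al2 : T2 -> T2) (b22 : T2 -> T2 -> T2)
    (b32 : T2 -> T2 -> T2 -> T2) (f : T1 -> T2) : Prop :=
  [/\ lin1 f,
      forall x, f (al1 x) = al2 (f x),
      forall x y, f (b21 x y) = b22 (f x) (f y) &
      forall x y z, f (b31 x y z) = b32 (f x) (f y) (f z)].

(* Representation (rho, D, theta) of (T, alpha) on the Hom-vector space (V, beta).
   rho : T -> End(V) linear and D, theta : T x T -> End(V) bilinear are encoded
   as bi-/trilinear maps; composition in End(V) is written pointwise in v. *)
Record rep_axioms (T : lmodType K) (al : T -> T) (b2 : T -> T -> T)
    (b3 : T -> T -> T -> T) (V : lmodType K) (beta : V -> V)
    (rho : T -> V -> V) (D theta : T -> T -> V -> V) : Prop := {
  rep_lin_beta : lin1 beta;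
  rep_lin_rho : lin2 rho;
  rep_lin_D : lin3 D;
  rep_lin_theta : lin3 theta;
  HR01 : forall x1 v, rho (al x1) (beta v) = beta (rho x1 v);
  HR02 : forall x1 x2 v, D (al x1) (al x2) (beta v) = beta (D x1 x2 v);
  HR03 : forall x1 x2 v, theta (al x1) (al x2) (beta v) = beta (theta x1 x2 v);
  HR31 : forall x1 x2 v,
    D x1 x2 v - theta x2 x1 v + theta x1 x2 v + rho (b2 x1 x2) (beta v)
    - rho (al x1) (rho x2 v) + rho (al x2) (rho x1 v) = 0;
  HR41 : forall x1 x2 x3 v,
    D (b2 x1 x2) (al x3) v + D (b2 x2 x3) (al x1) v + D (b2 x3 x1) (al x2) v = 0;
  HR42 : forall x1 x2 y1 v,
    theta (b2 x1 x2) (al y1) (beta v)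
    = theta (al x1) (al y1) (rho x2 v) - theta (al x2) (al y1) (rho x1 v);
  HR51 : forall x1 x2 y2 v,
    D (al x1) (al x2) (rho y2 v)
    = rho (al (al y2)) (D x1 x2 v) + rho (b3 x1 x2 y2) (beta (beta v));
  HR52 : forall x1 y1 y2 v,
    theta (al x1) (b2 y1 y2) (beta v)
    = rho (al (al y1)) (theta x1 y2 v) - rho (al (al y2)) (theta x1 y1 v);
  HR61 : forall x1 x2 y1 y2 v,
    D (al (al x1)) (al (al x2)) (theta y1 y2 v)
    = theta (al (al y1)) (al (al y2)) (D x1 x2 v)
      + theta (b3 x1 x2 y1) (al (al y2)) (beta (beta v))
      + theta (al (al y1)) (b3 x1 x2 y2) (beta (beta v));
  HR62 : forall x1 y1 y2 y3 v,
    theta (al (al x1)) (b3 y1 y2 y3) (beta (beta v))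
    = theta (al (al y2)) (al (al y3)) (theta x1 y1 v)
      - theta (al (al y1)) (al (al y3)) (theta x1 y2 v)
      + D (al (al y1)) (al (al y2)) (theta x1 y3 v)
}.

Section Cohomology.
Variables (T : lmodType K) (al : T -> T) (b2 : T -> T -> T)
  (b3 : T -> T -> T -> T) (V : lmodType K) (beta : V -> V)
  (rho : T -> V -> V) (D theta : T -> T -> V -> V).

Definition C2 (nu : T -> T -> V) : Prop :=
  [/\ lin2 nu, forall x1 x2, nu x1 x2 = - nu x2 x1 &
      forall x1 x2, nu (al x1) (al x2) = beta (nu x1 x2)].

Definition C3 (om : T -> T -> T -> V) : Prop :=
  [/\ lin3 om, forall x1 x2 x3, om x1 x2 x3 = - om x2 x1 x3 &
      forall x1 x2 x3, om (al x1) (al x2) (al x3) = beta (om x1 x2 x3)].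

Definition Z23 (nu : T -> T -> V) (om : T -> T -> T -> V) : Prop :=
  C2 nu /\ C3 om /\
  [/\
  forall x1 x2 x3,
    (om x1 x2 x3 - rho (al x1) (nu x2 x3) + nu (b2 x1 x2) (al x3))
    + (om x2 x3 x1 - rho (al x2) (nu x3 x1) + nu (b2 x2 x3) (al x1))
    + (om x3 x1 x2 - rho (al x3) (nu x1 x2) + nu (b2 x3 x1) (al x2)) = 0,
  forall x1 x2 x3 y1,
    (theta (al x1) (al y1) (nu x2 x3) + om (b2 x1 x2) (al x3) (al y1))
    + (theta (al x2) (al y1) (nu x3 x1) + om (b2 x2 x3) (al x1) (al y1))
    + (theta (al x3) (al y1) (nu x1 x2) + om (b2 x3 x1) (al x2) (al y1)) = 0,
  forall x1 x2 y1 y2,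
    om (al x1) (al x2) (b2 y1 y2) + D (al x1) (al x2) (nu y1 y2)
    = nu (b3 x1 x2 y1) (al (al y2)) + nu (al (al y1)) (b3 x1 x2 y2)
      + rho (al (al y1)) (om x1 x2 y2) - rho (al (al y2)) (om x1 x2 y1) &
  forall x1 x2 y1 y2 y3,
    om (al (al x1)) (al (al x2)) (b3 y1 y2 y3)
      + D (al (al x1)) (al (al x2)) (om y1 y2 y3)
    = om (b3 x1 x2 y1) (al (al y2)) (al (al y3))
      + om (al (al y1)) (b3 x1 x2 y2) (al (al y3))
      + om (al (al y1)) (al (al y2)) (b3 x1 x2 y3)
      + theta (al (al y2)) (al (al y3)) (om x1 x2 y1)
      - theta (al (al y1)) (al (al y3)) (om x1 x2 y2)
      + D (al (al y1)) (al (al y2)) (om x1 x2 y3)].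

Definition B23 (nu : T -> T -> V) (om : T -> T -> T -> V) : Prop :=
  C2 nu /\ C3 om /\
  exists f : T -> V, [/\ lin1 f, forall x, f (al x) = beta (f x),
    forall x1 x2, nu x1 x2 = rho x1 (f x2) - rho x2 (f x1) - f (b2 x1 x2) &
    forall x1 x2 x3, om x1 x2 x3 = theta x2 x3 (f x1) - theta x1 x3 (f x2)
                                   + D x1 x2 (f x3) - f (b3 x1 x2 x3)].

Definition cohomologous (c1 c2 : (T -> T -> V) * (T -> T -> T -> V)) : Prop :=
  B23 (fun x y => c1.1 x y - c2.1 x y) (fun x y z => c1.2 x y z - c2.2 x y z).

Record ext := Ext {
  ext_T : lmodType K;
  ext_al : ext_T -> ext_T;
  ext_b2 : ext_T -> ext_T -> ext_T;
  ext_b3 : ext_T -> ext_T -> ext_T -> ext_T;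
  ext_hlya : HLYA_axioms ext_al ext_b2 ext_b3;
  ext_i : V -> ext_T;
  ext_p : ext_T -> T;
  ext_i_lin : lin1 ext_i;
  ext_i_inj : injective ext_i;
  ext_i_comm : forall v, ext_al (ext_i v) = ext_i (beta v);
  ext_p_hom : HLYA_hom ext_al ext_b2 ext_b3 al b2 b3 ext_p;
  ext_p_surj : forall x, exists y, ext_p y = x;
  ext_exact : forall y, (exists v, ext_i v = y) <-> ext_p y = 0;
  ext_abelian : forall (v1 v2 : V) (z : ext_T),
    [/\ ext_b2 (ext_i v1) (ext_i v2) = 0,
        ext_b3 (ext_i v1) (ext_i v2) z = 0,
        ext_b3 (ext_i v1) z (ext_i v2) = 0 &
        ext_b3 z (ext_i v1) (ext_i v2) = 0];
  ext_induces : exists sigma : T -> ext_T,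
    [/\ lin1 sigma,
        forall x, ext_p (sigma x) = x &
        forall x, ext_al (sigma x) = sigma (al x)] /\
    [/\ forall x v, ext_i (rho x v) = ext_b2 (sigma x) (ext_i v),
        forall x1 x2 v, ext_i (D x1 x2 v) = ext_b3 (sigma x1) (sigma x2) (ext_i v) &
        forall x1 x2 v, ext_i (theta x1 x2 v) = ext_b3 (ext_i v) (sigma x1) (sigma x2)]
}.

Definition ext_equiv (E1 E2 : ext) : Prop :=
  exists F : ext_T E1 -> ext_T E2,
    [/\ HLYA_hom (@ext_al E1) (@ext_b2 E1) (@ext_b3 E1)
                 (@ext_al E2) (@ext_b2 E2) (@ext_b3 E2) F,
        forall v, F (@ext_i E1 v) = @ext_i E2 v &
        forall y, @ext_p E2 (F y) = @ext_p E1 y].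

End Cohomology.
End HLYA.

(* Main.v *)
Require Import Defs.
From HB Require Import structures.
From mathcomp Require Import all_boot all_algebra.
Set Implicit Arguments. Unset Strict Implicit. Unset Printing Implicit Defensive.
Import GRing.Theory.
Local Open Scope ring_scope.
From Stdlib Require Import ClassicalEpsilon FunctionalExtensionality.
 

Inductive zexp := ZA of nat | Z0 | ZP of zexp & zexp | ZN of zexp.

Section ZSolve.
Variable M : zmodType.
Fixpoint zeval (env : seq M) (e : zexp) : M :=
  match e with
  | ZA n => nth 0 env n
  | Z0 => 0
  | ZP a b => zeval env a + zeval env b
  | ZN a => - zeval env a
  end.
Fixpoint evalnf (env : seq M) (l : seq int) : M :=
  match l with
  | [::] => 0
  | c :: l' => (head 0 env) *~ c + evalnf (behead env) l'
  end.
Fixpoint addl (l1 l2 : seq int) : seq int :=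
  match l1, l2 with
  | [::], _ => l2
  | _, [::] => l1
  | c1 :: l1', c2 :: l2' => (c1 + c2) :: addl l1' l2'
  end.
Fixpoint nf (e : zexp) : seq int :=
  match e with
  | ZA n => rcons (nseq n 0) 1
  | Z0 => [::]
  | ZP a b => addl (nf a) (nf b)
  | ZN a => map (fun c : int => - c) (nf a)
  end.
Lemma evalnf_add env l1 l2 : evalnf env (addl l1 l2) = evalnf env l1 + evalnf env l2.
Proof.
elim: l1 l2 env => [|c1 l1 IH] [|c2 l2] env /=; rewrite ?add0r ?addr0 //.
by rewrite IH mulrzDr addrACA.
Qed.
Lemma evalnf_opp env l : evalnf env (map (fun c : int => - c) l) = - evalnf env l.
Proof.
elim: l env => [|c l IH] env /=; first by rewrite oppr0.
by rewrite IH opprD -mulrNz.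
Qed.
Lemma evalnf_atom env n : evalnf env (rcons (nseq n 0) 1) = nth 0 env n.
Proof.
elim: n env => [|n IH] [|x env] /=; rewrite ?mulr1z ?addr0 ?mulr0z ?add0r //.
by rewrite IH; case: n {IH}.
Qed.
Lemma zeval_nf env e : zeval env e = evalnf env (nf e).
Proof.
elim: e env => [n|| a IHa b IHb | a IHa] env /=.
- by rewrite evalnf_atom.
- by [].
- by rewrite evalnf_add IHa IHb.
- by rewrite evalnf_opp IHa.
Qed.
Lemma evalnf0 env l : all (fun c => c == 0) l -> evalnf env l = 0.
Proof.
elim: l env => [|c l IH] env //= /andP[/eqP -> /IH ->].
by rewrite mulr0z addr0.
Qed.
Lemma zsolve env e1 e2 : all (fun c => c == 0) (nf (ZP e1 (ZN e2))) ->
  zeval env e1 = zeval env e2.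
Proof.
move=> h; apply/eqP; rewrite -subr_eq0; apply/eqP.
by have := zeval_nf env (ZP e1 (ZN e2)); rewrite evalnf0.
Qed.
End ZSolve.

Ltac zmemb_syn x l := lazymatch l with
 | nil => constr:(false)
 | cons x _ => constr:(true)
 | cons _ ?l' => zmemb_syn x l' end.
Ltac zmemb_conv x l := lazymatch l with
 | nil => constr:(false)
 | cons ?y ?l' => match constr:(tt) with
      | _ => let _ := constr:(@Logic.eq_refl _ x : x = y) in constr:(true)
      | _ => zmemb_conv x l' end end.
Ltac zmemb x l := let b := zmemb_syn x l in
  lazymatch b with
  | true => constr:(true)
  | false => lazymatch x with (_ *: _)%R => zmemb_conv x l | _ => constr:(false) end
  end.
Ltac zcollect t l :=
  lazymatch t with
  | (?a + ?b)%R => let l1 := zcollect a l in zcollect b l1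
  | (- ?a)%R => zcollect a l
  | 0%R => l
  | _ => let b := zmemb t l in
         lazymatch b with true => l | false => constr:(cons t l) end
  end.
Ltac zindex_conv x l := lazymatch l with
 | cons ?y ?l' => match constr:(tt) with
      | _ => let _ := constr:(@Logic.eq_refl _ x : x = y) in constr:(0%N)
      | _ => let n := zindex_conv x l' in constr:(S n) end end.
Ltac zindex_syn x l := lazymatch l with
 | cons x _ => constr:(0%N)
 | cons _ ?l' => let n := zindex_syn x l' in constr:(S n) end.
Ltac zindex x l := let b := zmemb_syn x l in
  lazymatch b with
  | true => zindex_syn x l
  | false => zindex_conv x l
  end.
Ltac zreify t l :=
  lazymatch t with
  | (?a + ?b)%R => let ea := zreify a l in let eb := zreify b l in constr:(ZP ea eb)
  | (- ?a)%R => let ea := zreify a l in constr:(ZN ea)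
  | 0%R => constr:(Z0)
  | _ => let n := zindex t l in constr:(ZA n)
  end.
Ltac zmodeq :=
  lazymatch goal with |- @eq ?ty ?A ?B =>
    let l0 := constr:(@nil ty) in
    let l1 := zcollect A l0 in let l := zcollect B l1 in
    let ea := zreify A l in let eb := zreify B l in
    change (@zeval _ l ea = @zeval _ l eb); apply: zsolve; vm_compute; reflexivity
  end.

Ltac zdebug :=
  lazymatch goal with |- @eq ?ty ?A ?B =>
    let l0 := constr:(@nil ty) in
    let l1 := zcollect A l0 in let l := zcollect B l1 in idtac l end.

Lemma zuse (M : zmodType) (L R A B : M) : L = R -> A - B = L - R -> A = B.
Proof. by move=> -> /eqP; rewrite subrr subr_eq0 => /eqP. Qed.
Lemma zuseN (M : zmodType) (L R A B : M) : L = R -> A - B = R - L -> A = B.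
Proof. by move=> -> /eqP; rewrite subrr subr_eq0 => /eqP. Qed.
Lemma zadd (M : zmodType) (a b c d : M) : a = b -> c = d -> a + c = b + d.
Proof. by move=> -> ->. Qed.
Lemma zneg (M : zmodType) (a b : M) : a = b -> - a = - b.
Proof. by move=> ->. Qed.
Lemma pair_ext (A B : Type) (p q : A * B) : p.1 = q.1 -> p.2 = q.2 -> p = q.
Proof. by case: p q => [? ?] [? ?] /= -> ->. Qed.
Ltac zby h := first [ apply: (zuse h); zmodeq | apply: (zuseN h); zmodeq ].

Ltac zby2 h1 h2 := first [zby (zadd h1 h2) | zby (zadd h1 (zneg h2))].
Ltac zby3 h1 h2 h3 := first [zby2 (zadd h1 h2) h3 | zby2 (zadd h1 (zneg h2)) h3].
Ltac zby4 h1 h2 h3 h4 := first [zby3 (zadd h1 h2) h3 h4 | zby3 (zadd h1 (zneg h2)) h3 h4].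
Ltac zby5 h1 h2 h3 h4 h5 := first [zby4 (zadd h1 h2) h3 h4 h5 | zby4 (zadd h1 (zneg h2)) h3 h4 h5].
Ltac zby6 h1 h2 h3 h4 h5 h6 := first [zby5 (zadd h1 h2) h3 h4 h5 h6 | zby5 (zadd h1 (zneg h2)) h3 h4 h5 h6].

Section LinUtil.
Variable K : fieldType.
Implicit Types A B C E : lmodType K.

Lemma lin1D A B (f : A -> B) : lin1 f -> forall x y, f (x + y) = f x + f y.
Proof. by move=> h x y; have := h 1 x y; rewrite !scale1r. Qed.
Lemma lin10 A B (f : A -> B) : lin1 f -> f 0 = 0.
Proof. move=> h; have e := lin1D h 0 0; rewrite addr0 in e.
by apply: (@addrI _ (f 0)); rewrite addr0 -e. Qed.
Lemma lin1N A B (f : A -> B) : lin1 f -> forall x, f (- x) = - f x.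
Proof. by move=> h x; have := h (-1) x 0; rewrite !addr0 (lin10 h) addr0 !scaleN1r. Qed.
Lemma lin1Z A B (f : A -> B) : lin1 f -> forall a x, f (a *: x) = a *: f x.
Proof. by move=> h a x; have := h a x 0; rewrite !addr0 (lin10 h) addr0. Qed.

Definition lin1E A B (f : A -> B) (h : lin1 f) := (lin1D h, lin1N h, lin10 h, lin1Z h).

Lemma lin2_1 A B C (f : A -> B -> C) : lin2 f -> forall y, lin1 (fun x => f x y).
Proof. by case. Qed.
Lemma lin2_2 A B C (f : A -> B -> C) : lin2 f -> forall x, lin1 (f x).
Proof. by case. Qed.
Lemma lin2D1 A B C (f : A -> B -> C) (h : lin2 f) x y z : f (x + y) z = f x z + f y z.
Proof. exact: (lin1D (lin2_1 h z)). Qed.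
Lemma lin2N1 A B C (f : A -> B -> C) (h : lin2 f) x z : f (- x) z = - f x z.
Proof. exact: (lin1N (lin2_1 h z)). Qed.
Lemma lin201 A B C (f : A -> B -> C) (h : lin2 f) z : f 0 z = 0.
Proof. exact: (lin10 (lin2_1 h z)). Qed.
Lemma lin2D2 A B C (f : A -> B -> C) (h : lin2 f) x y z : f x (y + z) = f x y + f x z.
Proof. exact: (lin1D (lin2_2 h x)). Qed.
Lemma lin2N2 A B C (f : A -> B -> C) (h : lin2 f) x z : f x (- z) = - f x z.
Proof. exact: (lin1N (lin2_2 h x)). Qed.
Lemma lin202 A B C (f : A -> B -> C) (h : lin2 f) x : f x 0 = 0.
Proof. exact: (lin10 (lin2_2 h x)). Qed.
Lemma lin2Z1 A B C (f : A -> B -> C) (h : lin2 f) a x z : f (a *: x) z = a *: f x z.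
Proof. exact: (lin1Z (lin2_1 h z)). Qed.
Lemma lin2Z2 A B C (f : A -> B -> C) (h : lin2 f) a x z : f x (a *: z) = a *: f x z.
Proof. exact: (lin1Z (lin2_2 h x)). Qed.
Definition lin2E A B C (f : A -> B -> C) (h : lin2 f) :=
  (lin2D1 h, lin2N1 h, lin201 h, lin2D2 h, lin2N2 h, lin202 h, lin2Z1 h, lin2Z2 h).

Lemma lin3_1 A B C E (f : A -> B -> C -> E) : lin3 f -> forall y z, lin1 (fun x => f x y z).
Proof. by case. Qed.
Lemma lin3_2 A B C E (f : A -> B -> C -> E) : lin3 f -> forall x z, lin1 (fun y => f x y z).
Proof. by case. Qed.
Lemma lin3_3 A B C E (f : A -> B -> C -> E) : lin3 f -> forall x y, lin1 (f x y).
Proof. by case. Qed.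
Section L3. Variables (A B C E : lmodType K) (f : A -> B -> C -> E) (h : lin3 f).
Lemma lin3D1 x x' y z : f (x + x') y z = f x y z + f x' y z.
Proof. exact: (lin1D (lin3_1 h y z)). Qed.
Lemma lin3N1 x y z : f (- x) y z = - f x y z.
Proof. exact: (lin1N (lin3_1 h y z)). Qed.
Lemma lin301 y z : f 0 y z = 0.
Proof. exact: (lin10 (lin3_1 h y z)). Qed.
Lemma lin3D2 x y y' z : f x (y + y') z = f x y z + f x y' z.
Proof. exact: (lin1D (lin3_2 h x z)). Qed.
Lemma lin3N2 x y z : f x (- y) z = - f x y z.
Proof. exact: (lin1N (lin3_2 h x z)). Qed.
Lemma lin302 x z : f x 0 z = 0.
Proof. exact: (lin10 (lin3_2 h x z)). Qed.
Lemma lin3D3 x y z z' : f x y (z + z') = f x y z + f x y z'.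
Proof. exact: (lin1D (lin3_3 h x y)). Qed.
Lemma lin3N3 x y z : f x y (- z) = - f x y z.
Proof. exact: (lin1N (lin3_3 h x y)). Qed.
Lemma lin303 x y : f x y 0 = 0.
Proof. exact: (lin10 (lin3_3 h x y)). Qed.
Lemma lin3Z1 a x y z : f (a *: x) y z = a *: f x y z.
Proof. exact: (lin1Z (lin3_1 h y z)). Qed.
Lemma lin3Z2 a x y z : f x (a *: y) z = a *: f x y z.
Proof. exact: (lin1Z (lin3_2 h x z)). Qed.
Lemma lin3Z3 a x y z : f x y (a *: z) = a *: f x y z.
Proof. exact: (lin1Z (lin3_3 h x y)). Qed.
End L3.
Definition lin3E A B C E (f : A -> B -> C -> E) (h : lin3 f) :=
  (lin3D1 h, lin3N1 h, lin301 h, lin3D2 h, lin3N2 h, lin302 h,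
   lin3D3 h, lin3N3 h, lin303 h, lin3Z1 h, lin3Z2 h, lin3Z3 h).
End LinUtil.

Section GenHom.
Variable K : fieldType.

Lemma hlya_pull (A B : lmodType K) (alA : A -> A) (b2A : A -> A -> A) (b3A : A -> A -> A -> A)
  (alB : B -> B) (b2B : B -> B -> B) (b3B : B -> B -> B -> B) (f : A -> B) :
  injective f -> HLYA_hom alA b2A b3A alB b2B b3B f ->
  HLYA_axioms alB b2B b3B -> HLYA_axioms alA b2A b3A.
Proof.
move=> finj [fl fal fb2 fb3] hB.
have fE := lin1E fl.
have aE := lin1E (hly_lin_al hB); have bE := lin2E (hly_lin_b2 hB).
have cE := lin3E (hly_lin_b3 hB).
split.
- by move=> a x y; apply: finj; rewrite !(fE, fal, fb2, fb3) ?aE.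
- by split=> [y a x1 x2|x a y1 y2]; apply: finj; rewrite !(fE, fal, fb2, fb3) ?bE.
- by split=> [y z a x1 x2|x z a y1 y2|x y a z1 z2]; apply: finj;
    rewrite !(fE, fal, fb2, fb3) ?cE.
- by move=> x y; apply: finj; rewrite !(fE, fal, fb2, fb3) (HLY01 hB).
- by move=> x y z; apply: finj; rewrite !(fE, fal, fb2, fb3) (HLY02 hB).
- by move=> x y; apply: finj; rewrite !(fE, fal, fb2, fb3) (HLY1 hB).
- by move=> x y z; apply: finj; rewrite !(fE, fal, fb2, fb3) (HLY2 hB).
- by move=> x y z; apply: finj; rewrite !(fE, fal, fb2, fb3) (HLY3 hB).
- by move=> x y z w; apply: finj; rewrite !(fE, fal, fb2, fb3) (HLY4 hB).
- by move=> x y z w; apply: finj; rewrite !(fE, fal, fb2, fb3) (HLY5 hB).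
- by move=> x y z w t; apply: finj; rewrite !(fE, fal, fb2, fb3) (HLY6 hB).
Qed.

Lemma hom_comp (A B C : lmodType K) (alA : A -> A) (b2A : A -> A -> A) (b3A : A -> A -> A -> A)
  (alB : B -> B) (b2B : B -> B -> B) (b3B : B -> B -> B -> B)
  (alC : C -> C) (b2C : C -> C -> C) (b3C : C -> C -> C -> C) (f : A -> B) (g : B -> C) :
  HLYA_hom alA b2A b3A alB b2B b3B f -> HLYA_hom alB b2B b3B alC b2C b3C g ->
  HLYA_hom alA b2A b3A alC b2C b3C (fun x => g (f x)).
Proof.
move=> [fl fal fb2 fb3] [gl gal gb2 gb3]; split.
- by move=> a x y; rewrite fl gl.
- by move=> x; rewrite fal gal.
- by move=> x y; rewrite fb2 gb2.
- by move=> x y z; rewrite fb3 gb3.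
Qed.

Lemma hom_inv (A B : lmodType K) (alA : A -> A) (b2A : A -> A -> A) (b3A : A -> A -> A -> A)
  (alB : B -> B) (b2B : B -> B -> B) (b3B : B -> B -> B -> B) (f : A -> B) (g : B -> A) :
  injective f -> HLYA_hom alA b2A b3A alB b2B b3B f -> (forall y, f (g y) = y) ->
  HLYA_hom alB b2B b3B alA b2A b3A g.
Proof.
move=> finj [fl fal fb2 fb3] fgK; split.
- by move=> a x y; apply: finj; rewrite fl !fgK.
- by move=> x; apply: finj; rewrite fal !fgK.
- by move=> x y; apply: finj; rewrite fb2 !fgK.
- by move=> x y z; apply: finj; rewrite fb3 !fgK.
Qed.

Lemma hom_id (A : lmodType K) (alA : A -> A) (b2A : A -> A -> A) (b3A : A -> A -> A -> A) :
  HLYA_hom alA b2A b3A alA b2A b3A id.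
Proof. by split. Qed.

End GenHom.

Section Main.
Variables (K : fieldType) (T : lmodType K) (al : T -> T) (b2 : T -> T -> T)
  (b3 : T -> T -> T -> T) (V : lmodType K) (beta : V -> V) (rho : T -> V -> V)
  (D theta : T -> T -> V -> V).
Hypotheses (hT : HLYA_axioms al b2 b3) (hR : rep_axioms al b2 b3 beta rho D theta).

Local Notation alE := (lin1E (hly_lin_al hT)).
Local Notation b2E := (lin2E (hly_lin_b2 hT)).
Local Notation b3E := (lin3E (hly_lin_b3 hT)).
Local Notation betaE := (lin1E (rep_lin_beta hR)).
Local Notation rhoE := (lin2E (rep_lin_rho hR)).
Local Notation DE := (lin3E (rep_lin_D hR)).
Local Notation thE := (lin3E (rep_lin_theta hR)).

Lemma Dform x y v : D x y v = theta y x v - theta x y v - rho (b2 x y) (beta v)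
  + rho (al x) (rho y v) - rho (al y) (rho x v).
Proof. zby (HR31 hR x y v). Qed.

Lemma beta2rho y v : beta (beta (rho y v)) = rho (al (al y)) (beta (beta v)).
Proof. by rewrite -!(HR01 hR). Qed.

Lemma DD x1 x2 y1 y2 v :
  D (al (al x1)) (al (al x2)) (D y1 y2 v)
  = D (al (al y1)) (al (al y2)) (D x1 x2 v)
    + D (b3 x1 x2 y1) (al (al y2)) (beta (beta v))
    + D (al (al y1)) (b3 x1 x2 y2) (beta (beta v)).
Proof.
rewrite (Dform y1 y2 v) !DE.
rewrite (HR61 hR x1 x2 y2 y1) (HR61 hR x1 x2 y1 y2).
rewrite (HR51 hR (al x1) (al x2) (b2 y1 y2)) (HR02 hR) !(HLY01 hT) (HLY5 hT) !rhoE.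
rewrite (HR51 hR (al x1) (al x2) (al y1)) (HR51 hR (al x1) (al x2) (al y2)).
rewrite (HR51 hR x1 x2 y2) (HR51 hR x1 x2 y1) !rhoE !beta2rho.
rewrite (Dform (al (al y1)) (al (al y2)) (D x1 x2 v)).
rewrite (Dform (b3 x1 x2 y1) (al (al y2)) (beta (beta v))).
rewrite (Dform (al (al y1)) (b3 x1 x2 y2) (beta (beta v))).
rewrite ?(HLY01 hT) ?(HLY02 hT).
zmodeq.
Qed.


Lemma Danti x y v : D x y v + D y x v = 0.
Proof.
rewrite (Dform x y) (Dform y x).
have h := HLY1 hT x y.
have e : b2 y x = - b2 x y by apply/eqP; rewrite -addr_eq0 addrC h.
rewrite e rhoE; zmodeq.
Qed.

Lemma fstD (p q : T * V) : (p + q).1 = p.1 + q.1. Proof. by []. Qed.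
Lemma sndD (p q : T * V) : (p + q).2 = p.2 + q.2. Proof. by []. Qed.
Lemma fstN (p : T * V) : (- p).1 = - p.1. Proof. by []. Qed.
Lemma sndN (p : T * V) : (- p).2 = - p.2. Proof. by []. Qed.
Lemma fstZ a (p : T * V) : (a *: p).1 = a *: p.1. Proof. by []. Qed.
Lemma sndZ a (p : T * V) : (a *: p).2 = a *: p.2. Proof. by []. Qed.
Lemma fst0 : (0 : T * V).1 = 0. Proof. by []. Qed.
Lemma snd0 : (0 : T * V).2 = 0. Proof. by []. Qed.
Definition prE := (fstD, sndD, fstN, sndN, fstZ, sndZ, fst0, snd0).

Section Twist.
Variables (nu : T -> T -> V) (om : T -> T -> T -> V).

Definition tw_al (p : T * V) : T * V := (al p.1, beta p.2).
Definition tw_b2 (p q : T * V) : T * V :=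
  (b2 p.1 q.1, nu p.1 q.1 + rho p.1 q.2 - rho q.1 p.2).
Definition tw_b3 (p q r : T * V) : T * V :=
  (b3 p.1 q.1 r.1, om p.1 q.1 r.1 + D p.1 q.1 r.2 - theta p.1 r.1 q.2 + theta q.1 r.1 p.2).

Lemma tw_hlya : Z23 al b2 b3 beta rho D theta nu om -> HLYA_axioms tw_al tw_b2 tw_b3.
Proof.
move=> [[nulin nuanti nual] [[omlin omanti omal] [CC1 CC2 CC3 CC4]]].
have nuE := lin2E nulin; have omE := lin3E omlin.
split; rewrite /tw_al /tw_b2 /tw_b3.
- move=> a [x u] [y v]; apply: pair_ext; rewrite ?prE /=; rewrite ?alE ?betaE //.
- split=> [[y v] a [x1 u1] [x2 u2]|[x v] a [y1 v1] [y2 v2]]; apply: pair_ext; rewrite ?prE /=;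
    rewrite ?b2E ?nuE ?rhoE ?scalerDr ?scalerN //; zmodeq.
- split=> [[y v] [z w] a [x1 u1] [x2 u2]|[x u] [z w] a [y1 v1] [y2 v2]|[x u] [y v] a [z1 w1] [z2 w2]];
    apply: pair_ext; rewrite ?prE /=;
    rewrite ?b3E ?omE ?DE ?thE ?scalerDr ?scalerN //; zmodeq.
- move=> [x u] [y v]; apply: pair_ext; rewrite ?prE /=; first exact: (HLY01 hT).
  by rewrite !betaE nual !(HR01 hR).
- move=> [x u] [y v] [z w]; apply: pair_ext; rewrite ?prE /=; first exact: (HLY02 hT).
  by rewrite !betaE omal (HR02 hR) !(HR03 hR).
- move=> [x u] [y v]; apply: pair_ext; rewrite ?prE /=; first exact: (HLY1 hT).
  rewrite (nuanti x y); zmodeq.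
- move=> [x u] [y v] [z w]; apply: pair_ext; rewrite ?prE /=; first exact: (HLY2 hT).
  rewrite (omanti x y z); zby (Danti x y w).
- move=> [x1 u1] [x2 u2] [x3 u3]; apply: pair_ext; rewrite ?prE /=; first exact: (HLY3 hT).
  rewrite !rhoE.
  zby4 (CC1 x1 x2 x3) (HR31 hR x1 x2 u3) (HR31 hR x2 x3 u1) (HR31 hR x3 x1 u2).
- move=> [x1 u1] [x2 u2] [x3 u3] [y w]; apply: pair_ext; rewrite ?prE /=; first exact: (HLY4 hT).
  rewrite !thE.
  zby5 (CC2 x1 x2 x3 y) (HR41 hR x1 x2 x3 (beta w)) (HR42 hR x1 x2 y u3)
    (HR42 hR x2 x3 y u1) (HR42 hR x3 x1 y u2).
- move=> [x1 u1] [x2 u2] [y1 v1] [y2 v2]; apply: pair_ext; rewrite ?prE /=; first exact: (HLY5 hT).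
  rewrite ?DE ?rhoE ?betaE.
  zby5 (CC3 x1 x2 y1 y2) (HR51 hR x1 x2 y1 v2) (HR51 hR x1 x2 y2 v1)
    (HR52 hR x2 y1 y2 u1) (HR52 hR x1 y1 y2 u2).
- move=> [x1 u1] [x2 u2] [y1 v1] [y2 v2] [y3 v3]; apply: pair_ext; rewrite ?prE /=; first exact: (HLY6 hT).
  rewrite ?DE ?thE ?betaE.
  zby6 (CC4 x1 x2 y1 y2 y3) (HR62 hR x2 y1 y2 y3 u1) (HR62 hR x1 y1 y2 y3 u2)
    (HR61 hR x1 x2 y2 y3 v1) (HR61 hR x1 x2 y1 y3 v2) (DD x1 x2 y1 y2 v3).
Qed.


Lemma pairZ0 a (x y : T) : ((a *: x + y, 0) : T * V) = a *: (x, 0) + (y, 0).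
Proof. by apply: pair_ext; rewrite !prE /= ?scaler0 ?addr0. Qed.

Lemma tw_Z23 : HLYA_axioms tw_al tw_b2 tw_b3 -> Z23 al b2 b3 beta rho D theta nu om.
Proof.
move=> htw.
have l2 := hly_lin_b2 htw; have l3 := hly_lin_b3 htw.
have nuT x y : nu x y = (tw_b2 (x, 0) (y, 0)).2.
  by rewrite /tw_b2 /= !rhoE subr0 addr0.
have omT x y z : om x y z = (tw_b3 (x, 0) (y, 0) (z, 0)).2.
  by rewrite /tw_b3 /= !DE !thE subr0 !addr0.
split; [|split]; [split|split|split].
- split=> [y a x1 x2|x a y1 y2]; rewrite !nuT pairZ0.
    by rewrite (lin2_1 l2) !prE.
  by rewrite (lin2_2 l2) !prE.
- move=> x y; rewrite !nuT; have := HLY1 htw (x, 0) (y, 0).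
  move/(congr1 snd); rewrite !prE => h; apply/eqP; rewrite -addr_eq0 h //.
- move=> x y; have := HLY01 htw (x, 0) (y, 0).
  move/(congr1 snd); rewrite /tw_b2 /tw_al /= ?betaE ?rhoE ?betaE => h; zby h.
- split=> [y z a x1 x2|x z a y1 y2|x y a z1 z2]; rewrite !omT pairZ0.
  + by rewrite (lin3_1 l3) !prE.
  + by rewrite (lin3_2 l3) !prE.
  + by rewrite (lin3_3 l3) !prE.
- move=> x y z; rewrite !omT; have := HLY2 htw (x, 0) (y, 0) (z, 0).
  move/(congr1 snd); rewrite !prE => h; apply/eqP; rewrite -addr_eq0 h //.
- move=> x y z; have := HLY02 htw (x, 0) (y, 0) (z, 0).
  move/(congr1 snd); rewrite /tw_b3 /tw_al /= ?betaE ?DE ?thE ?betaE => h; zby h.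
- move=> x1 x2 x3; have := HLY3 htw (x1, 0) (x2, 0) (x3, 0).
  move/(congr1 snd); rewrite /tw_b2 /tw_b3 /tw_al !prE /= ?betaE ?rhoE ?DE ?thE ?betaE ?rhoE => h.
  zby h.
- move=> x1 x2 x3 y; have := HLY4 htw (x1, 0) (x2, 0) (x3, 0) (y, 0).
  move/(congr1 snd); rewrite /tw_b2 /tw_b3 /tw_al !prE /= ?betaE ?rhoE ?DE ?thE ?betaE ?rhoE => h.
  zby h.
- move=> x1 x2 y1 y2; have := HLY5 htw (x1, 0) (x2, 0) (y1, 0) (y2, 0).
  move/(congr1 snd); rewrite /tw_b2 /tw_b3 /tw_al !prE /= ?betaE ?rhoE ?DE ?thE ?betaE ?rhoE => h.
  zby h.
- move=> x1 x2 y1 y2 y3; have := HLY6 htw (x1, 0) (x2, 0) (y1, 0) (y2, 0) (y3, 0).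
  move/(congr1 snd); rewrite /tw_b2 /tw_b3 /tw_al !prE /= ?betaE ?rhoE ?DE ?thE ?betaE ?rhoE => h.
  zby h.
Qed.

End Twist.

Lemma C2_sub nu1 nu2 : C2 al beta nu1 -> C2 al beta nu2 ->
  C2 al beta (fun x y => nu1 x y - nu2 x y).
Proof.
move=> [l1 a1 e1] [l2 a2 e2]; have n1E := lin2E l1; have n2E := lin2E l2.
split.
- split=> [y a x1 x2|x a y1 y2] /=; rewrite ?n1E ?n2E scalerBr; zmodeq.
- by move=> x y /=; rewrite (a1 x y) (a2 x y); zmodeq.
- by move=> x y /=; rewrite e1 e2 !betaE.
Qed.

Lemma C3_sub om1 om2 : C3 al beta om1 -> C3 al beta om2 ->
  C3 al beta (fun x y z => om1 x y z - om2 x y z).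
Proof.
move=> [l1 a1 e1] [l2 a2 e2]; have n1E := lin3E l1; have n2E := lin3E l2.
split.
- split=> [y z a x1 x2|x z a y1 y2|x y a z1 z2] /=; rewrite ?n1E ?n2E scalerBr; zmodeq.
- by move=> x y z /=; rewrite (a1 x y z) (a2 x y z); zmodeq.
- by move=> x y z /=; rewrite e1 e2 !betaE.
Qed.

Lemma hom_cohom nu1 om1 nu2 om2 (G : T * V -> T * V) :
  C2 al beta nu1 -> C3 al beta om1 -> C2 al beta nu2 -> C3 al beta om2 ->
  HLYA_hom tw_al (tw_b2 nu1) (tw_b3 om1) tw_al (tw_b2 nu2) (tw_b3 om2) G ->
  (forall u, G (0, u) = (0, u)) -> (forall p, (G p).1 = p.1) ->
  cohomologous al b2 b3 beta rho D theta (nu1, om1) (nu2, om2).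
Proof.
move=> c21 c31 c22 c32 [Gl Gal Gb2 Gb3] G0 G1.
have GE := lin1E Gl.
pose f x := (G (x, 0)).2.
have Gx0 x : G (x, 0) = (x, f x) by apply: pair_ext; rewrite ?G1.
have Gf x u : G (x, u) = (x, f x + u).
  have -> : ((x, u) : T * V) = (x, 0) + (0, u) by apply: pair_ext; rewrite !prE /= ?addr0 ?add0r.
  by rewrite GE Gx0 G0; apply: pair_ext; rewrite !prE /= ?addr0.
split; [exact: C2_sub | split; [exact: C3_sub|]].
exists f; split.
- by move=> a x y; rewrite /f pairZ0 !GE !prE.
- move=> x; have := Gal (x, 0); rewrite /tw_al /= betaE Gx0 Gx0 /=.
  by move/(congr1 snd).
- move=> x y /=; have := Gb2 (x, 0) (y, 0); rewrite /tw_b2 /= !Gx0 Gf /=.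
  move/(congr1 snd); rewrite /= ?rhoE => h; zby h.
- move=> x y z /=; have := Gb3 (x, 0) (y, 0) (z, 0); rewrite /tw_b3 /= !Gx0 Gf /=.
  move/(congr1 snd); rewrite /= ?DE ?thE => h; zby h.
Qed.

Lemma cohom_hom nu1 om1 nu2 om2 :
  cohomologous al b2 b3 beta rho D theta (nu1, om1) (nu2, om2) ->
  exists G : T * V -> T * V,
  [/\ HLYA_hom tw_al (tw_b2 nu1) (tw_b3 om1) tw_al (tw_b2 nu2) (tw_b3 om2) G,
      forall u, G (0, u) = (0, u) & forall p, (G p).1 = p.1].
Proof.
move=> [_ [_ [f [fl fal fnu fom]]]] /=; have fE := lin1E fl.
exists (fun p => (p.1, p.2 + f p.1)); split => //.
- split.
  + move=> a [x u] [y v]; apply: pair_ext; rewrite ?prE //= !fE scalerDr; zmodeq.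
  + by move=> [x u]; apply: pair_ext; rewrite /tw_al //= fal betaE.
  + move=> [x u] [y v]; apply: pair_ext; rewrite /tw_b2 //= ?rhoE.
    have h := fnu x y; simpl in h; zby h.
  + move=> [x u] [y v] [z w]; apply: pair_ext; rewrite /tw_b3 //= ?DE ?thE.
    have h := fom x y z; simpl in h; zby h.
- by move=> u; rewrite /= fE addr0.
Qed.


Local Notation ep E := (@ext_p _ _ _ _ _ _ _ _ _ _ E).
Local Notation eal E := (@ext_al _ _ _ _ _ _ _ _ _ _ E).
Local Notation eb2 E := (@ext_b2 _ _ _ _ _ _ _ _ _ _ E).
Local Notation eb3 E := (@ext_b3 _ _ _ _ _ _ _ _ _ _ E).
Local Notation ei E := (@ext_i _ _ _ _ _ _ _ _ _ _ E).

Section Ext.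
Variable E : ext al b2 b3 beta rho D theta.

Definition sec_ok (s : T -> ext_T E) : Prop :=
  [/\ lin1 s, forall x, ep E (s x) = x & forall x, eal E (s x) = s (al x)] /\
  [/\ forall x v, ei E (rho x v) = eb2 E (s x) (ei E v),
      forall x1 x2 v, ei E (D x1 x2 v) = eb3 E (s x1) (s x2) (ei E v) &
      forall x1 x2 v, ei E (theta x1 x2 v) = eb3 E (ei E v) (s x1) (s x2)].

Definition iinv (y : ext_T E) : V := epsilon (inhabits 0) (fun v => ei E v = y).

Lemma ep_lin : lin1 (ep E). Proof. by case: (@ext_p_hom _ _ _ _ _ _ _ _ _ _ E). Qed.
Lemma ep_b2 x y : ep E (eb2 E x y) = b2 (ep E x) (ep E y).
Proof. by case: (@ext_p_hom _ _ _ _ _ _ _ _ _ _ E). Qed.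
Lemma ep_b3 x y z : ep E (eb3 E x y z) = b3 (ep E x) (ep E y) (ep E z).
Proof. by case: (@ext_p_hom _ _ _ _ _ _ _ _ _ _ E). Qed.
Lemma ep_i v : ep E (ei E v) = 0.
Proof. by apply/(@ext_exact _ _ _ _ _ _ _ _ _ _ E); exists v. Qed.
Lemma iinvK y : ep E y = 0 -> ei E (iinv y) = y.
Proof.
move=> h; have [v hv] := (@ext_exact _ _ _ _ _ _ _ _ _ _ E y).2 h.
exact: (epsilon_spec (inhabits 0) (fun v => ei E v = y) (ex_intro _ v hv)).
Qed.
Lemma iinv_i v : iinv (ei E v) = v.
Proof. by apply: (@ext_i_inj _ _ _ _ _ _ _ _ _ _ E); rewrite iinvK // ep_i. Qed.

Local Notation epE := (lin1E ep_lin).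
Local Notation eiE := (lin1E (@ext_i_lin _ _ _ _ _ _ _ _ _ _ E)).
Local Notation ealE := (lin1E (hly_lin_al (@ext_hlya _ _ _ _ _ _ _ _ _ _ E))).
Local Notation eb2E := (lin2E (hly_lin_b2 (@ext_hlya _ _ _ _ _ _ _ _ _ _ E))).
Local Notation eb3E := (lin3E (hly_lin_b3 (@ext_hlya _ _ _ _ _ _ _ _ _ _ E))).

Lemma ab1 u v : eb2 E (ei E u) (ei E v) = 0.
Proof. by case: (@ext_abelian _ _ _ _ _ _ _ _ _ _ E u v 0). Qed.
Lemma ab2 u v z : eb3 E (ei E u) (ei E v) z = 0.
Proof. by case: (@ext_abelian _ _ _ _ _ _ _ _ _ _ E u v z). Qed.
Lemma ab3 u v z : eb3 E (ei E u) z (ei E v) = 0.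
Proof. by case: (@ext_abelian _ _ _ _ _ _ _ _ _ _ E u v z). Qed.
Lemma ab4 u v z : eb3 E z (ei E u) (ei E v) = 0.
Proof. by case: (@ext_abelian _ _ _ _ _ _ _ _ _ _ E u v z). Qed.

Variable s : T -> ext_T E.
Hypothesis hs : sec_ok s.

Lemma s_lin : lin1 s. Proof. by case: hs => [[]]. Qed.
Lemma s_p x : ep E (s x) = x. Proof. by case: hs => [[]]. Qed.
Lemma s_al x : eal E (s x) = s (al x). Proof. by case: hs => [[]]. Qed.
Lemma s_rho x v : ei E (rho x v) = eb2 E (s x) (ei E v).
Proof. by case: hs => [_ []]. Qed.
Lemma s_D x1 x2 v : ei E (D x1 x2 v) = eb3 E (s x1) (s x2) (ei E v).
Proof. by case: hs => [_ []]. Qed.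
Lemma s_th x1 x2 v : ei E (theta x1 x2 v) = eb3 E (ei E v) (s x1) (s x2).
Proof. by case: hs => [_ []]. Qed.
Local Notation sE := (lin1E s_lin).

Definition cnu x y := iinv (eb2 E (s x) (s y) - s (b2 x y)).
Definition com x y z := iinv (eb3 E (s x) (s y) (s z) - s (b3 x y z)).

Lemma icnu x y : ei E (cnu x y) = eb2 E (s x) (s y) - s (b2 x y).
Proof. by apply: iinvK; rewrite !epE ep_b2 !s_p subrr. Qed.
Lemma icom x y z : ei E (com x y z) = eb3 E (s x) (s y) (s z) - s (b3 x y z).
Proof. by apply: iinvK; rewrite !epE ep_b3 !s_p subrr. Qed.

Definition Psi (p : T * V) : ext_T E := s p.1 + ei E p.2.
Definition Psiinv (y : ext_T E) : T * V := (ep E y, iinv (y - s (ep E y))).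

Lemma Psi_hom : HLYA_hom tw_al (tw_b2 cnu) (tw_b3 com)
  (eal E) (eb2 E) (eb3 E) Psi.
Proof.
rewrite /Psi; split.
- move=> a [x u] [y v]; rewrite !prE /= !sE !eiE scalerDr; zmodeq.
- move=> [x u] /=; rewrite ealE s_al (@ext_i_comm _ _ _ _ _ _ _ _ _ _ E) //.
- move=> [x u] [y v] /=; rewrite !eiE icnu s_rho s_rho !eb2E ab1.
  zby (HLY1 (@ext_hlya _ _ _ _ _ _ _ _ _ _ E) (ei E u) (s y)).
- move=> [x u] [y v] [z w] /=; rewrite !eiE icom s_D s_th s_th !eb3E ab2 ab2 ab3 ab4.
  zby (HLY2 (@ext_hlya _ _ _ _ _ _ _ _ _ _ E) (s x) (ei E v) (s z)).
Qed.

Lemma Psi_fst p : ep E (Psi p) = p.1.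
Proof. by rewrite /Psi epE s_p ep_i addr0. Qed.

Lemma Psi_inj : injective Psi.
Proof.
move=> [x u] [y v] h.
have exy : x = y by have := congr1 (ep E) h; rewrite !Psi_fst.
move: h; rewrite /Psi /= exy => /addrI /(@ext_i_inj _ _ _ _ _ _ _ _ _ _ E) -> //.
Qed.

Lemma PsiK y : Psi (Psiinv y) = y.
Proof.
rewrite /Psi /= iinvK; first by rewrite addrC subrK.
by rewrite !epE s_p subrr.
Qed.

Lemma PsiinvK p : Psiinv (Psi p) = p.
Proof. by apply: Psi_inj; rewrite PsiK. Qed.

Lemma Psiinv_hom : HLYA_hom (eal E) (eb2 E) (eb3 E)
  tw_al (tw_b2 cnu) (tw_b3 com) Psiinv.
Proof. exact: (hom_inv Psi_inj Psi_hom PsiK). Qed.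

Lemma Psi0 u : Psi (0, u) = ei E u.
Proof. by rewrite /Psi /= sE add0r. Qed.

Lemma ext_Z23 : Z23 al b2 b3 beta rho D theta cnu com.
Proof. exact: tw_Z23 (hlya_pull Psi_inj Psi_hom (@ext_hlya _ _ _ _ _ _ _ _ _ _ E)). Qed.

End Ext.


Lemma ext_wd (E1 E2 : ext al b2 b3 beta rho D theta) (s1 : T -> ext_T E1) (s2 : T -> ext_T E2) :
  sec_ok s1 -> sec_ok s2 -> forall F : ext_T E1 -> ext_T E2,
  HLYA_hom (eal E1) (eb2 E1) (eb3 E1) (eal E2) (eb2 E2) (eb3 E2) F ->
  (forall v, F (ei E1 v) = ei E2 v) -> (forall y, ep E2 (F y) = ep E1 y) ->
  cohomologous al b2 b3 beta rho D theta (cnu s1, com s1) (cnu s2, com s2).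
Proof.
move=> h1 h2 F hF Fi Fp.
have [c21 [c31 _]] := ext_Z23 h1; have [c22 [c32 _]] := ext_Z23 h2.
apply: (@hom_cohom _ _ _ _ (fun p => Psiinv s2 (F (Psi s1 p)))) => //.
- exact: hom_comp (Psi_hom h1) (hom_comp hF (Psiinv_hom h2)).
- by move=> u; rewrite (Psi0 h1) Fi -(Psi0 h2) (PsiinvK h2).
- by move=> p; rewrite /Psiinv /= Fp (Psi_fst h1).
Qed.

Lemma ext_inj (E1 E2 : ext al b2 b3 beta rho D theta) (s1 : T -> ext_T E1) (s2 : T -> ext_T E2) :
  sec_ok s1 -> sec_ok s2 ->
  cohomologous al b2 b3 beta rho D theta (cnu s1, com s1) (cnu s2, com s2) ->
  ext_equiv E1 E2.
Proof.
move=> h1 h2 /cohom_hom [G [hG G0 G1]].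
exists (fun y => Psi s2 (G (Psiinv s1 y))); split.
- exact: hom_comp (Psiinv_hom h1) (hom_comp hG (Psi_hom h2)).
- by move=> v; rewrite -(Psi0 h1 v) (PsiinvK h1) G0 (Psi0 h2).
- by move=> y; rewrite (Psi_fst h2) G1.
Qed.

Definition sec (E : ext al b2 b3 beta rho D theta) : T -> ext_T E :=
  proj1_sig (constructive_indefinite_description _ (@ext_induces _ _ _ _ _ _ _ _ _ _ E)).
Lemma sec_okE (E : ext al b2 b3 beta rho D theta) : sec_ok (sec E).
Proof. exact: (proj2_sig (constructive_indefinite_description _ (@ext_induces _ _ _ _ _ _ _ _ _ _ E))). Qed.

Section Surj.
Variables (nu : T -> T -> V) (om : T -> T -> T -> V).
Hypothesis hZ : Z23 al b2 b3 beta rho D theta nu om.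

Definition ti (u : V) : T * V := (0, u).

Lemma ti_lin : lin1 ti.
Proof. by move=> a u v; apply: pair_ext; rewrite !prE /= ?scaler0 ?addr0. Qed.
Lemma ti_inj : injective ti.
Proof. by move=> u v /(congr1 snd). Qed.
Lemma ti_comm u : tw_al (ti u) = ti (beta u).
Proof. by apply: pair_ext; rewrite /= ?alE. Qed.
Lemma fst_hom : HLYA_hom tw_al (tw_b2 nu) (tw_b3 om) al b2 b3 fst.
Proof. by split. Qed.
Lemma fst_surj x : exists y : T * V, y.1 = x.
Proof. by exists (x, 0). Qed.
Lemma t_exact y : (exists v, ti v = y) <-> y.1 = 0.
Proof.
split; first by move=> [v <-].
by move=> h; exists y.2; apply: pair_ext.
Qed.

Lemma t_abelian u v z :
  [/\ tw_b2 nu (ti u) (ti v) = 0, tw_b3 om (ti u) (ti v) z = 0,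
      tw_b3 om (ti u) z (ti v) = 0 & tw_b3 om z (ti u) (ti v) = 0].
Proof.
have [[nul _ _] [[oml _ _] _]] := hZ.
have nuE := lin2E nul; have omE := lin3E oml.
split; apply: pair_ext; rewrite /tw_b2 /tw_b3 /= ?b2E ?b3E ?nuE ?omE ?rhoE ?DE ?thE ?snd0 ?fst0;
  zmodeq.
Qed.

Definition s0 (x : T) : T * V := (x, 0).

Lemma t_induces :
  [/\ lin1 s0, forall x, (s0 x).1 = x & forall x, tw_al (s0 x) = s0 (al x)] /\
  [/\ forall x v, ti (rho x v) = tw_b2 nu (s0 x) (ti v),
      forall x1 x2 v, ti (D x1 x2 v) = tw_b3 om (s0 x1) (s0 x2) (ti v) &
      forall x1 x2 v, ti (theta x1 x2 v) = tw_b3 om (ti v) (s0 x1) (s0 x2)].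
Proof.
have [[nul _ _] [[oml _ _] _]] := hZ.
have nuE := lin2E nul; have omE := lin3E oml.
split; split.
- by move=> a x y; apply: pair_ext; rewrite !prE /= ?scaler0 ?addr0.
- by [].
- by move=> x; apply: pair_ext; rewrite /= ?betaE.
- by move=> x v; apply: pair_ext; rewrite /tw_b2 /= ?b2E ?nuE ?rhoE; zmodeq.
- by move=> x1 x2 v; apply: pair_ext; rewrite /tw_b3 /= ?b3E ?omE ?DE ?thE; zmodeq.
- by move=> x1 x2 v; apply: pair_ext; rewrite /tw_b3 /= ?b3E ?omE ?DE ?thE; zmodeq.
Qed.

Definition text : ext al b2 b3 beta rho D theta :=
  @Ext _ _ al b2 b3 _ beta rho D theta (T * V)%type tw_al (tw_b2 nu) (tw_b3 om)
    (tw_hlya hZ) ti fst ti_lin ti_inj ti_comm fst_hom fst_surj t_exact t_abelian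
    (ex_intro _ s0 t_induces).

Lemma s0_ok : sec_ok (E:=text) s0.
Proof. exact: t_induces. Qed.

Lemma text_cohom :
  cohomologous al b2 b3 beta rho D theta (cnu (sec text), com (sec text)) (nu, om).
Proof.
have [[nul _ _] [[oml _ _] _]] := hZ.
have nuE := lin2E nul; have omE := lin3E oml.
have := ext_wd (sec_okE text) s0_ok (hom_id _ _ _) (fun v => erefl) (fun y => erefl).
have -> : cnu (E:=text) s0 = nu.
  apply: functional_extensionality => x; apply: functional_extensionality => y.
  rewrite /cnu; have -> : eb2 text (s0 x) (s0 y) - s0 (b2 x y) = ei text (nu x y).
    by apply: pair_ext; rewrite /= /tw_b2 /= ?b2E ?nuE ?rhoE; zmodeq.
  exact: iinv_i.
have -> : com (E:=text) s0 = om.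
  apply: functional_extensionality => x; apply: functional_extensionality => y.
  apply: functional_extensionality => z.
  rewrite /com; have -> : eb3 text (s0 x) (s0 y) (s0 z) - s0 (b3 x y z) = ei text (om x y z).
    by apply: pair_ext; rewrite /= /tw_b3 /= ?b3E ?omE ?DE ?thE; zmodeq.
  exact: iinv_i.
by [].
Qed.

End Surj.

Lemma main_field :
  exists Phi : ext al b2 b3 beta rho D theta -> (T -> T -> V) * (T -> T -> T -> V),
    [/\ forall E, Z23 al b2 b3 beta rho D theta (Phi E).1 (Phi E).2,
        forall E1 E2, ext_equiv E1 E2 ->
          cohomologous al b2 b3 beta rho D theta (Phi E1) (Phi E2),
        forall E1 E2, cohomologous al b2 b3 beta rho D theta (Phi E1) (Phi E2) ->
          ext_equiv E1 E2 &
        forall nu om, Z23 al b2 b3 beta rho D theta nu om ->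
          exists E, cohomologous al b2 b3 beta rho D theta (Phi E) (nu, om)].
Proof.
exists (fun E => (cnu (sec E), com (sec E))); split.
- by move=> E; exact: ext_Z23 (sec_okE E).
- move=> E1 E2 [F [hF Fi Fp]] /=; exact (ext_wd (sec_okE E1) (sec_okE E2) hF Fi Fp).
- by move=> E1 E2 h; exact: ext_inj (sec_okE E1) (sec_okE E2) h.
- by move=> nu om hZ; exists (text hZ); exact: text_cohom.
Qed.

End Main.

Unset Implicit Arguments.
Theorem theorem4p7 (K : closedFieldType)
  (hK2 : (2%:R : K) != 0) (hK3 : (3%:R : K) != 0)
  (T : lmodType K) (al : T -> T) (b2 : T -> T -> T) (b3 : T -> T -> T -> T)
  (hT : HLYA_axioms al b2 b3)
  (V : lmodType K) (beta : V -> V) (rho : T -> V -> V) (D theta : T -> T -> V -> V)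
  (hR : rep_axioms al b2 b3 beta rho D theta) :
  exists Phi : ext al b2 b3 beta rho D theta -> (T -> T -> V) * (T -> T -> T -> V),
    [/\ (* Phi lands in Z^2 x Z^3 *)
        forall E, Z23 al b2 b3 beta rho D theta (Phi E).1 (Phi E).2,
        (* well defined on equivalence classes *)
        forall E1 E2, ext_equiv E1 E2 ->
          cohomologous al b2 b3 beta rho D theta (Phi E1) (Phi E2),
        (* injective on classes *)
        forall E1 E2, cohomologous al b2 b3 beta rho D theta (Phi E1) (Phi E2) ->
          ext_equiv E1 E2 &
        (* surjective onto H^2 x H^3 *)
        forall nu om, Z23 al b2 b3 beta rho D theta nu om ->
          exists E, cohomologous al b2 b3 beta rho D theta (Phi E) (nu, om)].
Proof. exact: (main_field hT hR). Qed.
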